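(* Let $L$ be a list of sets, $F_t$, $F_c$, $F'$ families, $w$ a function from elements to $\mathbb{N}$ and $X$ a set. Suppose (i) $\mathrm{ssn\_aux}(L,F_t,F_c,w,X)=\mathrm{false}$; (ii) $\mathrm{ss}(A,w,X)<0$ for every entry $A$ of $L$; (iii) every $A\in F'\setminus F_t$ with $\mathrm{ss}(A,w,X)<0$ is an entry of $L$; (iv) $F_t\subseteq F'$; (v) $F'$ is union closed for $F_c$. Then $\mathrm{fs}(F',w,X)\ge 0$.
   Context: All sets and families are finite. A family $F$ is union closed if $A\cup B\in F$ for all $A,B\in F$; it is union closed for $F_c$ if it is union closed and $A\cup B\in F$ for all $A\in F$, $B\in F_c$. $\mathrm{sw}(w,A)=\sum_{a\in A}w(a)$; $\mathrm{ss}(A,w,X)=2\,\mathrm{sw}(w,A)-\mathrm{sw}(w,X)\in\mathbb{Z}$; $\mathrm{fs}(F,w,X)=\sum_{A\in F}\mathrm{ss}(A,w,X)$. For a family $G$ and a set $h$, $\mathrm{ica}_{G}(h,F) = F\cup\{h\}\cup\{h\cup B: B\in F\}\cup\{h\cup B: B\in G\}$. The function $\mathrm{ssn\_aux}(L,F_t,G,w,X)$ (boolean valued) is defined by recursion on the list $L$: $\mathrm{ssn\_aux}([\,],F_t,G,w,X) = (\mathrm{fs}(F_t,w,X)<0)$; and for $L = h\#t$: if $\mathrm{fs}(F_t,w,X)+\sum_{A \in h\#t}\mathrm{ss}(A,w,X)\ge 0$ (sum over list entries) then false; else if $\mathrm{ssn\_aux}(t,F_t,G,w,X)$ then true; else if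 $h\in F_t$ then false; else $\mathrm{ssn\_aux}(t,\mathrm{ica}_G(h,F_t),G,w,X)$. *)

(* Defs.v *)
From HB Require Import structures.
From mathcomp Require Import all_boot all_order all_algebra.
Set Implicit Arguments. Unset Strict Implicit. Unset Printing Implicit Defensive.
Import Order.TTheory GRing.Theory Num.Theory.
Local Open Scope ring_scope.

Section Defs.
Variable T : finType.

Definition sw (w : T -> nat) (A : {set T}) : nat := (\sum_(a in A) w a)%N.

Definition ss (A : {set T}) (w : T -> nat) (X : {set T}) : int :=
  (2 * sw w A)%N%:Z - (sw w X)%:Z.

Definition fs (F : {set {set T}}) (w : T -> nat) (X : {set T}) : int :=
  \sum_(A in F) ss A w X.

Definition union_closed (F : {set {set T}}) : Prop :=
  forall A B, A \in F -> B \in F -> A :|: B \in F.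

Definition union_closed_for (F Fc : {set {set T}}) : Prop :=
  union_closed F /\ (forall A B, A \in F -> B \in Fc -> A :|: B \in F).

Definition ica (G : {set {set T}}) (h : {set T}) (F : {set {set T}})
  : {set {set T}} :=
  F :|: [set h] :|: [set h :|: B | B in F] :|: [set h :|: B | B in G].

Fixpoint ssn_aux (L : seq {set T}) (Ft G : {set {set T}}) (w : T -> nat)
  (X : {set T}) : bool :=
  match L with
  | [::] => fs Ft w X < 0
  | h :: t =>
      if 0 <= fs Ft w X + \sum_(A <- h :: t) ss A w X then false
      else if ssn_aux t Ft G w X then true
      else if h \in Ft then false
      else ssn_aux t (ica G h Ft) G w X
  end.

End Defs.

(* Main.v *)
Require Import Defs.
From HB Require Import structures.
From mathcomp Require Import all_boot all_order all_algebra.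
Import Order.TTheory GRing.Theory Num.Theory.
Local Open Scope ring_scope.

Lemma sum_list_le (T : finType) (f : {set T} -> int) (L : seq {set T}) :
  forall S : {set {set T}},
  (forall A, A \in L -> f A < 0) -> (forall A, A \in S -> A \in L) ->
  \sum_(A <- L) f A <= \sum_(A in S) f A.
Proof.
elim: L => [|h t IH] S Hn HS.
  have -> : S = set0.
    by apply/setP => A; rewrite inE; apply/negP => /HS.
  by rewrite big_nil big_set0.
rewrite big_cons.
have Ht : forall A, A \in t -> f A < 0.
  by move=> A HA; apply: Hn; rewrite inE HA orbT.
have Hh : f h < 0 by apply: Hn; rewrite inE eqxx.
case: (boolP (h \in S)) => hS.
  rewrite (big_setD1 h hS) /= lerD2l; apply: IH => // A.
  rewrite !inE => /andP [Ah AS]; move: (HS A AS); rewrite inE.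
  by rewrite (negbTE Ah).
apply: le_trans (IH S Ht _).
  by rewrite gerDr ltW.
move=> A AS; move: (HS A AS); rewrite inE => /orP [/eqP E|//].
by rewrite -E AS in hS.
Qed.

Lemma key (T : finType) (L : seq {set T}) (Ft F' : {set {set T}})
  (w : T -> nat) (X : {set T}) :
  Ft \subset F' ->
  (forall A, A \in L -> ss A w X < 0) ->
  (forall A, A \in F' -> A \notin Ft -> ss A w X < 0 -> A \in L) ->
  fs Ft w X + \sum_(A <- L) ss A w X <= fs F' w X.
Proof.
move=> sub Hn Hc.
rewrite /fs [X in _ <= X](big_setID Ft) /= (setIidPr sub) lerD2l.
rewrite [X in _ <= X](big_setID [set A | ss A w X < 0]) /=.
apply: le_trans (_ : _ <= \sum_(i in (F' :\: Ft) :&: [set A | ss A w X < 0]) ss i w X) _.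
  apply: sum_list_le => // A; rewrite !inE => /andP [/andP [AF AFt] An].
  exact: Hc.
rewrite lerDl sumr_ge0 // => A; rewrite !inE => /andP [An _].
by rewrite leNgt.
Qed.

Theorem lemma5 (T : finType) (L : seq {set T}) (Ft Fc F' : {set {set T}})
  (w : T -> nat) (X : {set T}) :
  ssn_aux L Ft Fc w X = false ->
  (forall A, A \in L -> ss A w X < 0) ->
  (forall A, A \in F' -> A \notin Ft -> ss A w X < 0 -> A \in L) ->
  Ft \subset F' ->
  union_closed_for F' Fc ->
  0 <= fs F' w X.
Proof.
move=> + + + + [uc ucc].
elim: L Ft => [|h t IH] Ft /= Hs Hn Hc sub.
  have := @key _ [::] Ft F' w X sub Hn Hc; rewrite big_nil addr0; apply: le_trans.
  by rewrite leNgt Hs.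
have Ht : forall A, A \in t -> ss A w X < 0.
  by move=> A HA; apply: Hn; rewrite inE HA orbT.
case: ifP Hs => [H0 _|H0].
  exact: le_trans H0 (@key _ (h::t) Ft F' w X sub Hn Hc).
case: ifP => // Hst.
case: ifP => [hFt _|hFt Hs].
  apply: (IH Ft) => // A AF AFt An.
  move: (Hc A AF AFt An); rewrite inE => /orP [/eqP E|//].
  by rewrite E hFt in AFt.
case: (boolP (h \in F')) => hF'; last first.
  apply: (IH Ft) => // A AF AFt An.
  move: (Hc A AF AFt An); rewrite inE => /orP [/eqP E|//].
  by rewrite -E AF in hF'.
apply: (IH (ica Fc h Ft)) => //.
  move=> A AF AI An.
  have AFt : A \notin Ft by apply: contra AI; rewrite /ica !inE => ->.
  move: (Hc A AF AFt An); rewrite inE => /orP [/eqP E|//].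
  by move: AI; rewrite E /ica !inE eqxx /= orbT.
apply/subsetP => A; rewrite /ica !inE => /orP [/orP [/orP [AFt|/eqP ->]|]|].
- exact: (subsetP sub).
- exact: hF'.
- by case/imsetP => B BFt ->; apply: uc => //; apply: (subsetP sub).
- by case/imsetP => B BG ->; apply: ucc.
Qed.
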